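(* Suppose $N>n$. Then: (i) $r^{(2)}\ge\frac nN+\sqrt{\frac{n(N-n)}{N^2(N-1)}}$. (ii) If there exists a $2$-uniform $(N,n)$ dual pair for $\mathcal H$, then (a) $r^{(2)}=\frac nN+\sqrt{\frac{n(N-n)}{N^2(N-1)}}$, and (b) an $(N,n)$ dual pair $(F,G)$ belongs to $\mathcal R^{(2)}$ if and only if $(F,G)$ is $2$-uniform.
   Context: $\mathcal H$ is a complex Hilbert space of finite dimension $n$, inner product linear in the first argument. A finite sequence $F=\{f_i\}_{i=1}^N$ is a frame if there are $0<A\le B$ with $A\|f\|^2\le\sum_i|\langle f,f_i\rangle|^2\le B\|f\|^2$ for all $f$. $G=\{g_i\}_{i=1}^N$ is a dual of $F$ if $f=\sum_i\langle f,g_i\rangle f_i$ for all $f$; $(F,G)$ is then an $(N,n)$ dual pair. A dual pair is $1$-uniform if $\langle f_i,g_i\rangle$ is independent of $i$, and $2$-uniform if it is $1$-uniform and $\langle f_i,g_j\rangle\langle f_j,g_i\rangle$ is the same constant for all $i\ne j$. $\mathcal A_m$ is the set of $m$-element subsets of $\{1,\dots,N\}$; $E_{\Lambda,F,G}f=\sum_{i\in\Lambda}\langle f,f_i\rangle g_i$; $\rho$ is spectral radius; $r^{(m)}_{F,G}=\max_{\Lambda\in\mathcal A_m}\rho(E_{\Lambda,F,G})$; $r^{(1)}=\inf\{r^{(1)}_{F,G}:(F,G)\text{ an }(N,n)\text{ dual pair}\}$; $\mathcal R^{(1)}=\{(F,G):r^{(1)}_{F,G}=r^{(1)}\}$; $r^{(2)}=\inf\{r^{(2)}_{F,G}:(F,G)\in\mathcal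 R^{(1)}\}$; $\mathcal R^{(2)}=\{(F,G)\in\mathcal R^{(1)}:r^{(2)}_{F,G}=r^{(2)}\}$. *)

(* Defs.v *)
From mathcomp Require Import all_boot all_order all_algebra.
From mathcomp Require Import all_classical all_reals ereal.
From mathcomp Require Import complex.
Set Implicit Arguments. Unset Strict Implicit. Unset Printing Implicit Defensive.
Import Order.TTheory GRing.Theory Num.Theory.
Local Open Scope ring_scope.
Local Open Scope classical_set_scope.

Section Frames.
Variable R : realType.
Local Notation C := R[i].

Definition inner (n : nat) (x y : 'cV[C]_n) : C :=
  \sum_(k < n) x k ord0 * (y k ord0)^*.

Definition cmod (z : C) : R := complex.Re `|z|.

Definition is_frame (n N : nat) (F : 'I_N -> 'cV[C]_n) : Prop :=
  exists A B : R, 0 < A /\ A <= B /\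
    forall f : 'cV[C]_n,
      A * cmod (inner f f) <= \sum_(i < N) cmod (inner f (F i)) ^+ 2 /\
      \sum_(i < N) cmod (inner f (F i)) ^+ 2 <= B * cmod (inner f f).

Definition is_dual (n N : nat) (F G : 'I_N -> 'cV[C]_n) : Prop :=
  forall f : 'cV[C]_n, f = \sum_(i < N) inner f (G i) *: F i.

Definition dual_pair (n N : nat) (F G : 'I_N -> 'cV[C]_n) : Prop :=
  is_frame F /\ is_dual F G.

Definition one_uniform (n N : nat) (F G : 'I_N -> 'cV[C]_n) : Prop :=
  exists c : C, forall i : 'I_N, inner (F i) (G i) = c.

Definition two_uniform (n N : nat) (F G : 'I_N -> 'cV[C]_n) : Prop :=
  one_uniform F G /\
  exists d : C, forall i j : 'I_N, i != j ->
    inner (F i) (G j) * inner (F j) (G i) = d.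

(* E_{Lambda,F,G} f = sum_{i in Lambda} <f, f_i> g_i, as the matrix
   sum_{i in Lambda} g_i f_i^*  (so that E *m f = sum <f,f_i> g_i). *)
Definition E_op (n N : nat) (L : {set 'I_N}) (F G : 'I_N -> 'cV[C]_n)
  : 'M[C]_n :=
  \sum_(i in L) (G i *m (map_mx Num.conj (F i))^T).

Definition spec_rad (n : nat) (A : 'M[C]_n) : R :=
  sup [set cmod l | l in [set l : C | eigenvalue A l]].

Definition r_m (n N : nat) (m : nat) (F G : 'I_N -> 'cV[C]_n) : R :=
  \big[Num.max/0]_(L : {set 'I_N} | #|L| == m) spec_rad (E_op L F G).

Definition dual_pairs (n N : nat)
  : set (('I_N -> 'cV[C]_n) * ('I_N -> 'cV[C]_n)) :=
  [set FG | dual_pair FG.1 FG.2].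
Arguments dual_pairs n N : clear implicits.

(* r^{(1)} : infimum of r^{(1)}_{F,G} over all (N, n) dual pairs,
   taken in the extended reals (inf of the empty set is +oo) *)
Definition r1 (n N : nat) : \bar R :=
  ereal_inf [set (r_m 1 FG.1 FG.2)%:E | FG in dual_pairs n N].
Arguments r1 n N : clear implicits.

Definition R1 (n N : nat) : set (('I_N -> 'cV[C]_n) * ('I_N -> 'cV[C]_n)) :=
  [set FG | dual_pair FG.1 FG.2 /\ (r_m 1 FG.1 FG.2)%:E = r1 n N].
Arguments R1 n N : clear implicits.

Definition r2 (n N : nat) : \bar R :=
  ereal_inf [set (r_m 2 FG.1 FG.2)%:E | FG in R1 n N].
Arguments r2 n N : clear implicits.

Definition R2 (n N : nat) : set (('I_N -> 'cV[C]_n) * ('I_N -> 'cV[C]_n)) :=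
  [set FG | R1 n N FG /\ (r_m 2 FG.1 FG.2)%:E = r2 n N].
Arguments R2 n N : clear implicits.

End Frames.

Arguments dual_pairs R n N : clear implicits.
Arguments r1 R n N : clear implicits.
Arguments R1 R n N : clear implicits.
Arguments r2 R n N : clear implicits.
Arguments R2 R n N : clear implicits.

(* Main.v *)
Require Import Defs.
From mathcomp Require Import all_boot all_order all_algebra.
From mathcomp Require Import all_classical all_reals ereal.
From mathcomp Require Import complex.
From mathcomp Require Import separable cyclotomic cyclic.
From mathcomp Require Import ring lra.
Import Order.TTheory GRing.Theory Num.Theory.
Local Open Scope ring_scope.

Lemma cmod_def (R : realType) (z : R[i]) :
  cmod z = Num.sqrt (complex.Re z ^+ 2 + complex.Im z ^+ 2).
Proof. by case: z => a b; rewrite /cmod normc_def. Qed.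

Lemma cmodC (R : realType) (z : R[i]) : ((cmod z)%:C)%C = `|z|.
Proof. by rewrite /cmod normc_def. Qed.

Lemma cmod_ge0 (R : realType) (z : R[i]) : 0 <= cmod z.
Proof. by rewrite cmod_def sqrtr_ge0. Qed.

Lemma cmodM (R : realType) (x y : R[i]) : cmod (x * y) = cmod x * cmod y.
Proof.
apply: (@complexI R); rewrite rmorphM /= !cmodC; exact: normrM.
Qed.

Lemma cmodD (R : realType) (x y : R[i]) : cmod (x + y) <= cmod x + cmod y.
Proof. by rewrite -(@lecR R) rmorphD /= !cmodC ler_normD. Qed.

Lemma cmod_real (R : realType) (r : R) : cmod (r%:C)%C = `|r|.
Proof. by rewrite cmod_def /= expr0n /= addr0 sqrtr_sqr. Qed.

Lemma cmod_eq0 (R : realType) (z : R[i]) : cmod z = 0 -> z = 0.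
Proof. by move=> h; apply/eqP; rewrite -normr_eq0 -cmodC h. Qed.

Lemma cmod_conj (R : realType) (z : R[i]) : cmod z^* = cmod z.
Proof. by apply: (@complexI R); rewrite !cmodC norm_conjC. Qed.

Lemma Re_le_cmod (R : realType) (z : R[i]) : complex.Re z <= cmod z.
Proof.
rewrite cmod_def; apply: (le_trans (ler_norm _)).
rewrite -sqrtr_sqr ler_sqrt; last by rewrite addr_ge0 // sqr_ge0.
by rewrite lerDl sqr_ge0.
Qed.

Lemma cmod_sqr (R : realType) (z : R[i]) : (((cmod z) ^+ 2)%:C)%C = z * z^*.
Proof. by rewrite rmorphXn /= cmodC normCK. Qed.

Lemma ReD (R : realType) (x y : R[i]) : complex.Re (x + y) = complex.Re x + complex.Re y.
Proof. by case: x; case: y. Qed.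

Lemma Re_sum (R : realType) (I : finType) (P : pred I) (f : I -> R[i]) :
  complex.Re (\sum_(i | P i) f i) = \sum_(i | P i) complex.Re (f i).
Proof.
apply: (big_rec2 (fun a b => complex.Re b = a)) => // i a b _ <-.
by rewrite ReD.
Qed.
Lemma sqr_cplx (R : realType) (a b : R) :
  ((a +i* b)%C : R[i]) ^+ 2 = ((a ^+ 2 - b ^+ 2) +i* (2 * a * b))%C.
Proof. rewrite expr2; apply/eqP; rewrite eq_complex /=; apply/andP; split; apply/eqP; ring. Qed.

Lemma sub_cplx (R : realType) (c a b : R) :
  (((c + a) +i* b)%C : R[i]) - (c%:C)%C = (a +i* b)%C.
Proof. apply/eqP; rewrite eq_complex /=; apply/andP; split; apply/eqP; ring. Qed.

Lemma add_cplx (R : realType) (c a b : R) :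
  (c%:C)%C + ((a +i* b)%C : R[i]) = ((c + a) +i* b)%C.
Proof. apply/eqP; rewrite eq_complex /=; apply/andP; split; apply/eqP; ring. Qed.

Lemma good_sqrt (R : realType) (z : R[i]) :
  exists a b : R, 0 <= a /\ ((a +i* b)%C : R[i]) ^+ 2 = z.
Proof.
have [a [b h]]: exists a b : R, ((a +i* b)%C : R[i]) ^+ 2 = z.
  by case E: (sqrtC z) => [a b]; exists a, b; rewrite -E sqrtCK.
case: (lerP 0 a) => ha; first by exists a, b.
exists (- a), (- b); split; first by rewrite oppr_ge0 ltW.
have -> : ((- a) +i* (- b))%C = - ((a +i* b)%C : R[i]) by [].
by rewrite sqrrN.
Qed.

Lemma cmod_cplx_ge (R : realType) (x b : R) : 0 <= x -> x <= cmod ((x +i* b)%C : R[i]).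
Proof.
move=> hx; rewrite cmod_def /=.
rewrite -{1}(ger0_norm hx) -sqrtr_sqr ler_sqrt; last by rewrite addr_ge0 // sqr_ge0.
by rewrite lerDl sqr_ge0.
Qed.

Lemma core_lower (R : realType) (c D : R) (z : R[i]) :
  0 < c -> 0 <= D -> D <= complex.Re z ->
  exists l : R[i], [/\ l != 0, (l - (c%:C)%C) ^+ 2 = z & c + Num.sqrt D <= cmod l].
Proof.
move=> hc hD hz; have [a [b [ha hab]]] := @good_sqrt R z.
exists ((c + a) +i* b)%C; rewrite sub_cplx hab; split => //.
  apply/negP => /eqP/(congr1 (@complex.Re R)) /=; lra.
have haD : Num.sqrt D <= a.
  rewrite -(ger0_norm ha) -sqrtr_sqr ler_sqrt ?sqr_ge0 //.
  move: hz; rewrite -hab sqr_cplx /=; have := sqr_ge0 b; lra.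
have h := @cmod_cplx_ge R (c + a) b (addr_ge0 (ltW hc) ha); lra.
Qed.

Lemma core_upper (R : realType) (c : R) (z l : R[i]) :
  0 <= c -> (l - (c%:C)%C) ^+ 2 = z -> cmod l <= c + Num.sqrt (cmod z).
Proof.
move=> hc hl.
have e : cmod (l - (c%:C)%C) = Num.sqrt (cmod z).
  by rewrite -hl expr2 cmodM -expr2 sqrtr_sqr ger0_norm // cmod_ge0.
have := @cmodD R (c%:C)%C (l - (c%:C)%C).
by rewrite addrC subrK cmod_real ger0_norm // e addrC.
Qed.

Lemma core_rigid (R : realType) (c D : R) (z : R[i]) :
  0 < c -> 0 <= D ->
  (forall l : R[i], l != 0 -> (l - (c%:C)%C) ^+ 2 = z -> cmod l <= c + Num.sqrt D) ->
  complex.Re z <= D /\ (D <= complex.Re z -> z = (D%:C)%C).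
Proof.
move=> hc hD H; have [a [b [ha hab]]] := @good_sqrt R z.
have hl : ((c + a) +i* b)%C != 0 :> R[i].
  apply/negP => /eqP/(congr1 (@complex.Re R)) /=; lra.
have := H _ hl; rewrite sub_cplx => /(_ hab) h1.
have h2 := le_trans (@cmod_cplx_ge R (c + a) b (addr_ge0 (ltW hc) ha)) h1.
have haD : a ^+ 2 <= D.
  have h3 : a <= Num.sqrt D by lra.
  have hs := sqr_sqrtr hD; have hs0 := sqrtr_ge0 D; nra.
rewrite -hab sqr_cplx /=; split; first by have := sqr_ge0 b; lra.
move=> hDz; have hb2 : b ^+ 2 = 0 by have := sqr_ge0 b; lra.
have hb : b = 0 by apply/eqP; rewrite -sqrf_eq0 hb2.
by apply/eqP; rewrite eq_complex /= hb; apply/andP; split; apply/eqP; [lra| ring].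
Qed.

Lemma inner_conj (R : realType) (n : nat) (x y : 'cV[R[i]]_n) :
  (inner x y)^* = inner y x.
Proof.
rewrite /inner rmorph_sum; apply: eq_bigr => k _.
by rewrite rmorphM /= conjCK mulrC.
Qed.

Lemma inner_suml (R : realType) (n N : nat) (a : 'I_N -> R[i])
  (x : 'I_N -> 'cV[R[i]]_n) (y : 'cV[R[i]]_n) :
  inner (\sum_j a j *: x j) y = \sum_j a j * inner (x j) y.
Proof.
rewrite /inner; under eq_bigr => k _ do rewrite summxE mulr_suml.
rewrite exchange_big /=; apply: eq_bigr => j _; rewrite mulr_sumr.
by apply: eq_bigr => k _; rewrite mxE mulrA.
Qed.

Lemma innerZl (R : realType) (n : nat) (a : R[i]) (x y : 'cV[R[i]]_n) :
  inner (a *: x) y = a * inner x y.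
Proof.
by rewrite /inner mulr_sumr; apply: eq_bigr => k _; rewrite mxE mulrA.
Qed.

Lemma innerZr (R : realType) (n : nat) (a : R[i]) (x y : 'cV[R[i]]_n) :
  inner x (a *: y) = a^* * inner x y.
Proof.
rewrite /inner mulr_sumr; apply: eq_bigr => k _; rewrite mxE rmorphM /=.
by rewrite mulrCA.
Qed.

Lemma inner_ge0 (R : realType) (n : nat) (x : 'cV[R[i]]_n) : 0 <= inner x x.
Proof. by rewrite /inner sumr_ge0 // => k _; rewrite mul_conjC_ge0. Qed.

Lemma dual_trace (R : realType) (n N : nat) (F G : 'I_N -> 'cV[R[i]]_n) :
  is_dual F G -> \sum_i inner (F i) (G i) = n%:R.
Proof.
move=> hd.
have h1 k : \sum_i (G i k ord0)^* * F i k ord0 = 1.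
  have := hd (delta_mx k ord0) => /(congr1 (fun M : 'cV_n => M k ord0)).
  rewrite mxE !eqxx /= summxE => h; rewrite [RHS]h; apply: eq_bigr => i _.
  rewrite mxE; congr (_ * _); rewrite /inner (bigD1 k) //= mxE !eqxx mul1r.
  rewrite big1 ?addr0 // => l hl; rewrite mxE (negPf hl) mul0r.
  done.
transitivity (\sum_(k < n) (1 : R[i])); last by rewrite sumr_const card_ord.
rewrite exchange_big /=; apply: eq_bigr => k _; rewrite -(h1 k).
by apply: eq_bigr => i _; rewrite mulrC.
Qed.

Lemma dual_row (R : realType) (n N : nat) (F G : 'I_N -> 'cV[R[i]]_n) (i : 'I_N) :
  is_dual F G ->
  \sum_j inner (F i) (G j) * inner (F j) (G i) = inner (F i) (G i).
Proof. by move=> hd; rewrite [in RHS](hd (F i)) inner_suml. Qed.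

Definition fr {R : realType} {n : nat} (x : 'cV[R[i]]_n) : 'rV[R[i]]_n :=
  (map_mx Num.conj x)^T.

Lemma vE (R : realType) (n N : nat) (L : {set 'I_N}) (F G : 'I_N -> 'cV[R[i]]_n)
  (v : 'rV[R[i]]_n) :
  v *m E_op L F G = \sum_(i in L) ((v *m G i) 0 0) *: fr (F i).
Proof.
rewrite /E_op mulmx_sumr; apply: eq_bigr => i _.
by rewrite mulmxA {1}[v *m G i]mx11_scalar mul_scalar_mx.
Qed.

Lemma frG (R : realType) (n : nat) (x y : 'cV[R[i]]_n) :
  (fr x *m y) 0 0 = (inner x y)^*.
Proof.
rewrite mxE /inner rmorph_sum; apply: eq_bigr => k _.
by rewrite !mxE rmorphM /= conjCK mulrC.
Qed.

Lemma scale00 (R : realType) (a : R[i]) (M : 'M[R[i]]_1) : (a *: M) 0 0 = a * M 0 0.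
Proof. by rewrite mxE. Qed.

Lemma lincombG (R : realType) (n : nat) (a b : R[i]) (x y g : 'cV[R[i]]_n) :
  ((a *: fr x + b *: fr y) *m g) 0 0 = a * (inner x g)^* + b * (inner y g)^*.
Proof.
rewrite mulmxDl -!scalemxAl [LHS]mxE.
by rewrite !scale00 !frG.
Qed.

Lemma scaleG (R : realType) (n : nat) (a : R[i]) (v : 'rV[R[i]]_n) (g : 'cV[R[i]]_n) :
  ((a *: v) *m g) 0 0 = a * (v *m g) 0 0.
Proof. by rewrite -scalemxAl mxE. Qed.

Lemma ev1_char (R : realType) (n N : nat) (F G : 'I_N -> 'cV[R[i]]_n) (i : 'I_N) l :
  eigenvalue (E_op [set i] F G) l -> l != 0 -> l = (inner (F i) (G i))^*.
Proof.
case/eigenvalueP => v hv v0 l0; move: hv; rewrite vE big_set1 => hv.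
set s := (v *m G i) 0 0 in hv.
have := congr1 (fun w => (w *m G i) 0 0) hv; rewrite /= !scaleG frG -/s => h.
have s0 : s != 0.
  apply/negP => /eqP s0; move: hv; rewrite s0 scale0r => /esym/eqP.
  by rewrite scaler_eq0 (negPf l0) (negPf v0).
by apply: (mulIf s0); rewrite -h mulrC.
Qed.

Lemma ev1_ex (R : realType) (n N : nat) (F G : 'I_N -> 'cV[R[i]]_n) (i : 'I_N) :
  inner (F i) (G i) != 0 -> eigenvalue (E_op [set i] F G) ((inner (F i) (G i))^*).
Proof.
move=> c0; apply/eigenvalueP; exists (fr (F i)); first by rewrite vE big_set1 frG.
apply/negP => /eqP h; move: c0; rewrite -conjC_eq0 -frG h mul0mx mxE eqxx.
by [].
Qed.

Lemma ev2_char (R : realType) (n N : nat) (F G : 'I_N -> 'cV[R[i]]_n) (i j : 'I_N) l :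
  i != j -> eigenvalue (E_op [set i; j] F G) l -> l != 0 ->
  (l - (inner (F i) (G i))^*) * (l - (inner (F j) (G j))^*) =
  (inner (F j) (G i))^* * (inner (F i) (G j))^*.
Proof.
move=> ij /eigenvalueP [v hv v0] l0; move: hv.
rewrite vE big_setU1 ?inE // big_set1 => hv.
set si := (v *m G i) 0 0 in hv; set sj := (v *m G j) 0 0 in hv.
have {}hv : si *: fr (F i) + sj *: fr (F j) = l *: v := hv.
set a := (inner (F i) (G i))^*; set e := (inner (F j) (G j))^*.
set b := (inner (F j) (G i))^*; set b' := (inner (F i) (G j))^*.
have hi := congr1 (fun w => (w *m G i) 0 0) hv.
have hj := congr1 (fun w => (w *m G j) 0 0) hv.
rewrite /= lincombG scaleG -/si in hi; rewrite /= lincombG scaleG -/sj in hj.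
rewrite -/a -/b in hi; rewrite -/b' -/e in hj.
set X := (l - a) * (l - e) - b * b'.
have Xi : X * si = 0.
  have -> : X * si = (l - e) * (l * si - (si * a + sj * b)) + b * (l * sj - (si * b' + sj * e)).
    by rewrite /X; ring.
  by rewrite hi hj !subrr !mulr0 addr0.
have Xj : X * sj = 0.
  have -> : X * sj = (l - a) * (l * sj - (si * b' + sj * e)) + b' * (l * si - (si * a + sj * b)).
    by rewrite /X; ring.
  by rewrite hi hj !subrr !mulr0 addr0.
apply/eqP; rewrite -subr_eq0 -/X; apply: contraT => X0.
have si0 : si = 0 by move/eqP: Xi; rewrite mulf_eq0 (negPf X0) => /eqP.
have sj0 : sj = 0 by move/eqP: Xj; rewrite mulf_eq0 (negPf X0) => /eqP.
move: hv; rewrite si0 sj0 !scale0r addr0 => /esym/eqP.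
by rewrite scaler_eq0 (negPf l0) (negPf v0).
Qed.

Lemma ev2_ex (R : realType) (n N : nat) (F G : 'I_N -> 'cV[R[i]]_n) (i j : 'I_N) l c :
  i != j -> (inner (F i) (G i))^* = c -> (inner (F j) (G j))^* = c ->
  (inner (F j) (G i))^* != 0 -> l != 0 ->
  (l - c) ^+ 2 = (inner (F j) (G i))^* * (inner (F i) (G j))^* ->
  eigenvalue (E_op [set i; j] F G) l.
Proof.
move=> ij ha he b0 l0 hl; apply/eigenvalueP.
set b := (inner (F j) (G i))^* in b0 hl; set b' := (inner (F i) (G j))^* in hl.
pose v := b *: fr (F i) + (l - c) *: fr (F j).
have si : (v *m G i) 0 0 = b * l by rewrite lincombG ha -/b; ring.
have sj : (v *m G j) 0 0 = (l - c) * l.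
  rewrite lincombG he -/b'; have -> : b * b' = (l - c) ^+ 2 by rewrite hl.
  by ring.
exists v.
  rewrite vE big_setU1 ?inE // big_set1 si sj /v scalerDr !scalerA.
  by rewrite [l * b]mulrC [l * (l - c)]mulrC.
apply/negP => /eqP v0; move: si; rewrite v0 mul0mx mxE => /esym/eqP.
by rewrite mulf_eq0 (negPf b0) (negPf l0).
Qed.

Lemma SR_le (R : realType) (n : nat) (A : 'M[R[i]]_n) (x : R) :
  0 <= x -> (forall l, eigenvalue A l -> cmod l <= x) -> spec_rad A <= x.
Proof.
move=> x0 H; rewrite /spec_rad.
set S := (X in sup X).
case: (pselect (exists y, S y)) => [ne|no].
  by apply: ge_sup => // y [l hl <-]; apply: H.
have -> : S = set0.
  by apply/seteqP; split => y // Sy; exfalso; apply: no; exists y.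
by rewrite sup0.
Qed.

Lemma SR_ge (R : realType) (n : nat) (A : 'M[R[i]]_n) (l : R[i]) (M : R) :
  eigenvalue A l -> (forall mu, eigenvalue A mu -> cmod mu <= M) ->
  cmod l <= spec_rad A.
Proof.
move=> hl H; rewrite /spec_rad; apply: ub_le_sup.
  by exists M => y [mu hmu <-]; apply: H.
by exists l.
Qed.

Lemma RM_le (R : realType) (n N m : nat) (F G : 'I_N -> 'cV[R[i]]_n) (x : R) :
  0 <= x -> (forall L : {set 'I_N}, #|L| == m -> spec_rad (E_op L F G) <= x) ->
  r_m m F G <= x.
Proof. by move=> x0 H; rewrite /r_m; apply: bigmax_le. Qed.

Lemma RM_ge (R : realType) (n N m : nat) (F G : 'I_N -> 'cV[R[i]]_n) (L : {set 'I_N}) :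
  #|L| == m -> spec_rad (E_op L F G) <= r_m m F G.
Proof. by move=> hL; rewrite /r_m; apply: le_bigmax_cond. Qed.

Lemma RM_ge0 (R : realType) (n N m : nat) (F G : 'I_N -> 'cV[R[i]]_n) :
  0 <= r_m m F G.
Proof.
by have /bigmax_leP [] := lexx (r_m m F G).
Qed.

Arguments ev1_char {R n N F G i l}.
Arguments ev1_ex {R n N F G i}.
Arguments ev2_char {R n N F G i j l}.
Arguments core_upper {R c z l}.

Lemma conjC_realC (R : realType) (x : R) : ((x%:C)%C : R[i])^* = (x%:C)%C.
Proof. by apply/eqP; rewrite eq_complex /= oppr0 !eqxx. Qed.

Lemma Re_realC (R : realType) (x : R) : complex.Re ((x%:C)%C : R[i]) = x.
Proof. by []. Qed.

Lemma cmod0 (R : realType) : cmod (0 : R[i]) = 0.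
Proof. by rewrite cmod_def /= expr0n /= addr0 sqrtr0. Qed.

Lemma rm1_ge (R : realType) (n N : nat) (F G : 'I_N -> 'cV[R[i]]_n) (i : 'I_N) :
  cmod (inner (F i) (G i)) <= r_m 1 F G.
Proof.
have [c0|c0] := eqVneq (inner (F i) (G i)) 0.
  by rewrite c0 cmod0; apply: RM_ge0.
apply: le_trans (@RM_ge R n N 1 F G [set i] (introT eqP (cards1 i))).
rewrite -cmod_conj; apply: (@SR_ge R n _ _ (cmod (inner (F i) (G i)))).
  exact: ev1_ex.
move=> mu hmu; have [->|mu0] := eqVneq mu 0.
  by rewrite cmod0 cmod_ge0.
by rewrite (ev1_char hmu mu0) cmod_conj.
Qed.

Lemma rm1_le (R : realType) (n N : nat) (F G : 'I_N -> 'cV[R[i]]_n) (x : R) :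
  0 <= x -> (forall i, cmod (inner (F i) (G i)) <= x) -> r_m 1 F G <= x.
Proof.
move=> x0 H; apply: RM_le => // L /cards1P [i ->].
apply: SR_le => // mu hmu; have [->|mu0] := eqVneq mu 0.
  by rewrite cmod0.
by rewrite (ev1_char hmu mu0) cmod_conj.
Qed.

Definition zz {R : realType} {n N : nat} (F G : 'I_N -> 'cV[R[i]]_n) (i j : 'I_N) : R[i] :=
  (inner (F j) (G i))^* * (inner (F i) (G j))^*.

Lemma rm2_ge (R : realType) (n N : nat) (F G : 'I_N -> 'cV[R[i]]_n) (c : R) (i j : 'I_N) l :
  0 <= c -> i != j -> (forall k, inner (F k) (G k) = (c%:C)%C) ->
  eigenvalue (E_op [set i; j] F G) l -> cmod l <= r_m 2 F G.
Proof.
move=> c0 ij hc hl.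
have card2 : #|[set i; j]| == 2 by rewrite cards2 ij.
apply: le_trans (@RM_ge R n N 2 F G _ card2).
apply: (@SR_ge R n _ _ (c + Num.sqrt (cmod (zz F G i j)))) => // mu hmu.
have [->|mu0] := eqVneq mu 0.
  rewrite cmod0; apply: addr_ge0 => //; exact: sqrtr_ge0.
apply: core_upper => //; have := ev2_char ij hmu mu0.
by rewrite !hc !conjC_realC -expr2.
Qed.

Lemma rm2_le (R : realType) (n N : nat) (F G : 'I_N -> 'cV[R[i]]_n) (c x : R) :
  0 <= c -> 0 <= x -> (forall k, inner (F k) (G k) = (c%:C)%C) ->
  (forall i j, i != j -> c + Num.sqrt (cmod (zz F G i j)) <= x) -> r_m 2 F G <= x.
Proof.
move=> c0 x0 hc H; apply: RM_le => // L /cards2P [i [j [ij ->]]].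
apply: SR_le => // mu hmu; have [->|mu0] := eqVneq mu 0.
  by rewrite cmod0.
apply: le_trans (H i j ij); apply: core_upper => //; have := ev2_char ij hmu mu0.
by rewrite !hc !conjC_realC -expr2.
Qed.
Arguments dual_trace {R n N F G}.
Arguments dual_row {R n N F G}.

Arguments Re_le_cmod {R} z.
Arguments rm1_ge {R n N} F G i.
Arguments cmod_ge0 {R} z.

Definition c0 (R : realType) (n N : nat) : R := n%:R / N%:R.
Definition DD (R : realType) (n N : nat) : R :=
  n%:R * (N - n)%:R / (N%:R ^+ 2 * (N - 1)%:R).

Lemma sum_gap (R : realType) (N : nat) (P : pred 'I_N) (f : 'I_N -> R) (x : R) :
  \sum_(j | P j) f j = \sum_(j | P j) x -> (forall j, P j -> f j <= x) ->
  forall j, P j -> f j = x.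
Proof.
move=> hs hle j Pj.
have h : \sum_(k | P k) (x - f k) = 0 by rewrite sumrB hs subrr.
have hnn k : P k -> 0 <= x - f k by move=> Pk; rewrite subr_ge0 hle.
by have /eqP := psumr_eq0P hnn h Pj; rewrite subr_eq0 => /eqP.
Qed.

Lemma realC_nat (R : realType) (m : nat) : ((m%:R : R)%:C)%C = (m%:R : R[i]).
Proof. by rewrite rmorph_nat. Qed.

Lemma c0C (R : realType) (n N : nat) :
  ((c0 R n N)%:C)%C = (n%:R / N%:R : R[i]).
Proof. by rewrite /c0 fmorph_div /= !realC_nat. Qed.

Lemma c0_sum (R : realType) (n N : nat) : (0 < N)%N ->
  \sum_(j < N) c0 R n N = n%:R.
Proof.
move=> hN; rewrite sumr_const card_ord /c0 -[_ *+ N]mulr_natr mulfVK //.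
by rewrite pnatr_eq0 -lt0n.
Qed.

Lemma Re_nat (R : realType) (m : nat) : complex.Re (m%:R : R[i]) = m%:R.
Proof. by rewrite -realC_nat. Qed.

Lemma M1 (R : realType) (n N : nat) (F G : 'I_N -> 'cV[R[i]]_n) :
  (0 < N)%N -> is_dual F G -> c0 R n N <= r_m 1 F G.
Proof.
move=> hN hd; case: (lerP (c0 R n N) (r_m 1 F G)) => // hlt.
have hle j : complex.Re (inner (F j) (G j)) <= r_m 1 F G.
  exact: le_trans (Re_le_cmod _) (rm1_ge F G j).
have := @sum_gap R N predT (fun j => complex.Re (inner (F j) (G j))) (c0 R n N).
rewrite -Re_sum dual_trace // Re_nat c0_sum // => /(_ erefl).
have i0 : 'I_N := Ordinal hN.
move=> /(_ (fun j _ => le_trans (hle j) (ltW hlt)) i0 isT) e.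
by have := hle i0; rewrite e; lra.
Qed.

Lemma M2 (R : realType) (n N : nat) (F G : 'I_N -> 'cV[R[i]]_n) :
  (0 < N)%N -> is_dual F G -> r_m 1 F G <= c0 R n N ->
  forall i, inner (F i) (G i) = ((c0 R n N)%:C)%C.
Proof.
move=> hN hd hle i.
have hc j : cmod (inner (F j) (G j)) <= c0 R n N := le_trans (rm1_ge F G j) hle.
have := @sum_gap R N predT (fun j => complex.Re (inner (F j) (G j))) (c0 R n N).
rewrite -Re_sum dual_trace // Re_nat c0_sum // => /(_ erefl).
move=> /(_ (fun j _ => le_trans (Re_le_cmod _) (hc j)) i isT) e.
have := hc i; move: e; case: (inner (F i) (G i)) => a b /= ->.
rewrite cmod_def /= => h.
have c0ge : 0 <= c0 R n N by rewrite /c0 divr_ge0 ?ler0n.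
have hs : c0 R n N ^+ 2 + b ^+ 2 <= c0 R n N ^+ 2.
  have h0 : 0 <= c0 R n N ^+ 2 + b ^+ 2 by rewrite addr_ge0 ?sqr_ge0.
  have := sqr_sqrtr h0; have := sqrtr_ge0 (c0 R n N ^+ 2 + b ^+ 2); nra.
have hb : b = 0.
  by apply/eqP; rewrite -sqrf_eq0 eq_le sqr_ge0 andbT; lra.
by rewrite hb.
Qed.

Lemma M3 (R : realType) (n N : nat) (F G : 'I_N -> 'cV[R[i]]_n) :
  (0 < N)%N -> is_dual F G -> one_uniform F G ->
  forall i, inner (F i) (G i) = ((c0 R n N)%:C)%C.
Proof.
move=> hN hd [c hc] i; rewrite hc c0C.
have := dual_trace hd; under eq_bigr => j _ do rewrite hc.
rewrite sumr_const card_ord -[_ *+ N]mulr_natr => <-.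
by rewrite mulfK // pnatr_eq0 -lt0n.
Qed.

Lemma sum_const_neq (V : nmodType) (N : nat) (i : 'I_N) (x : V) :
  \sum_(j | j != i) x = x *+ (N - 1).
Proof. by rewrite sumr_const cardC1 card_ord subn1. Qed.

Lemma DD_eq (R : realType) (n N : nat) : (0 < n)%N -> (n < N)%N ->
  DD R n N *+ (N - 1) = c0 R n N - c0 R n N ^+ 2.
Proof.
move=> hn hnN.
have N0 : (N%:R : R) != 0 by rewrite pnatr_eq0 -lt0n (ltn_trans hn hnN).
have N1 : ((N - 1)%:R : R) != 0.
  by rewrite pnatr_eq0 subn_eq0 -ltnNge (leq_ltn_trans hn hnN).
rewrite -mulr_natl /DD /c0 (natrB _ (ltnW hnN)).
by field; rewrite N0 N1.
Qed.

Lemma DD_gt0 (R : realType) (n N : nat) : (0 < n)%N -> (n < N)%N -> 0 < DD R n N.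
Proof.
move=> hn hnN.
have h1 : (0 < N)%N := ltn_trans hn hnN.
have h2 : (0 < N - n)%N by rewrite subn_gt0.
have h3 : (0 < N - 1)%N by rewrite subn_gt0 (leq_ltn_trans hn hnN).
rewrite /DD divr_gt0 // mulr_gt0 // ?exprn_gt0 // ltr0n //.
Qed.

Lemma c0_gt0 (R : realType) (n N : nat) : (0 < n)%N -> (n < N)%N -> 0 < c0 R n N.
Proof.
move=> hn hnN; rewrite /c0 divr_gt0 // ltr0n //; exact: ltn_trans hn hnN.
Qed.

Lemma zz_conj (R : realType) (n N : nat) (F G : 'I_N -> 'cV[R[i]]_n) (i j : 'I_N) :
  (zz F G i j)^* = inner (F i) (G j) * inner (F j) (G i).
Proof. by rewrite /zz rmorphM /= !conjCK mulrC. Qed.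

Lemma offdiagC (R : realType) (n N : nat) (F G : 'I_N -> 'cV[R[i]]_n) (c : R) (i : 'I_N) :
  is_dual F G -> (forall k, inner (F k) (G k) = (c%:C)%C) ->
  \sum_(j | j != i) zz F G i j = (((c - c ^+ 2)%:C)%C).
Proof.
move=> hd hc; have h := dual_row i hd; rewrite (bigD1 i) //= !hc in h.
transitivity ((\sum_(j | j != i) inner (F i) (G j) * inner (F j) (G i))^*).
  rewrite rmorph_sum; apply: eq_bigr => j _; by rewrite rmorphM /zz mulrC.
have -> : \sum_(j | j != i) inner (F i) (G j) * inner (F j) (G i) =
          ((c%:C)%C - (c%:C)%C * (c%:C)%C) by move: h => /(canRL (addKr _)) ->; rewrite addrC.
by rewrite -rmorphM -rmorphB /= conjC_realC expr2.
Qed.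

Arguments offdiagC {R n N F G c} i.

Lemma offdiagRe (R : realType) (n N : nat) (F G : 'I_N -> 'cV[R[i]]_n) (c : R) (i : 'I_N) :
  is_dual F G -> (forall k, inner (F k) (G k) = (c%:C)%C) ->
  \sum_(j | j != i) complex.Re (zz F G i j) = c - c ^+ 2.
Proof. by move=> hd hc; rewrite -Re_sum (offdiagC i hd hc). Qed.

Arguments offdiagRe {R n N F G c} i.
Arguments ev2_ex {R n N F G i j l c}.
Arguments rm2_ge {R n N F G c i j l}.
Arguments rm2_le {R n N F G c x}.

Lemma two_indices (N : nat) (i : 'I_N) : (1 < N)%N -> exists j : 'I_N, j != i.
Proof.
move=> hN; have h0 : (0 < N)%N by apply: ltn_trans hN.
case: i => [[|k] hk].
  by exists (Ordinal hN); apply/eqP => /(congr1 val).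
by exists (Ordinal h0); apply/eqP => /(congr1 val).
Qed.

Arguments two_indices {N}.
Arguments core_lower {R c D z}.
Arguments core_rigid {R c D z}.

Lemma M5 (R : realType) (n N : nat) (F G : 'I_N -> 'cV[R[i]]_n) :
  (0 < n)%N -> (n < N)%N -> is_dual F G ->
  (forall k, inner (F k) (G k) = ((c0 R n N)%:C)%C) ->
  c0 R n N + Num.sqrt (DD R n N) <= r_m 2 F G.
Proof.
move=> hn hnN hd hc.
have hN : (0 < N)%N := ltn_trans hn hnN.
have hN1 : (1 < N)%N := leq_ltn_trans hn hnN.
pose i0 : 'I_N := Ordinal hN.
have [j0 hj0] := two_indices i0 hN1.
have hs := offdiagRe i0 hd hc.
have hD := DD_gt0 R n N hn hnN; have hc0 := c0_gt0 R n N hn hnN.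
have [[j hj hDj]|no] := pselect (exists2 j, j != i0 & DD R n N <= complex.Re (zz F G i0 j)).
  have [l [l0 hl hb]] := core_lower hc0 (ltW hD) hDj.
  apply: le_trans hb _.
  have hb0 : (inner (F j) (G i0))^* != 0.
    apply/negP => /eqP hb0; move: hDj; rewrite /zz hb0 mul0r.
    by have -> : complex.Re (0 : R[i]) = 0 by []; lra.
  apply: (@rm2_ge R n N F G (c0 R n N) i0 j l (ltW hc0) _ hc); first by rewrite eq_sym.
  apply: (ev2_ex _ _ _ hb0 l0 hl); first by rewrite eq_sym.
    by rewrite hc conjC_realC.
  by rewrite hc conjC_realC.
have hle j : j != i0 -> complex.Re (zz F G i0 j) <= DD R n N.
  move=> hj; case: (lerP (complex.Re (zz F G i0 j)) (DD R n N)) => // hlt.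
  by exfalso; apply: no; exists j => //; apply: ltW.
have := @sum_gap R N (fun j => j != i0) (fun j => complex.Re (zz F G i0 j)) (DD R n N).
rewrite hs sum_const_neq DD_eq // => /(_ erefl) /(_ hle j0 hj0) e.
by exfalso; apply: no; exists j0 => //; rewrite e.
Qed.

Arguments M1 {R n N F G}.
Arguments M2 {R n N F G}.
Arguments M3 {R n N F G}.

Lemma zzE (R : realType) (n N : nat) (F G : 'I_N -> 'cV[R[i]]_n) (i j : 'I_N) :
  zz F G i j = (inner (F i) (G j) * inner (F j) (G i))^*.
Proof. by rewrite -zz_conj conjCK. Qed.

Lemma M6 (R : realType) (n N : nat) (F G : 'I_N -> 'cV[R[i]]_n) :
  (0 < n)%N -> (n < N)%N -> is_dual F G -> two_uniform F G ->
  r_m 2 F G <= c0 R n N + Num.sqrt (DD R n N).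
Proof.
move=> hn hnN hd [h1 [d hdd]].
have hN : (0 < N)%N := ltn_trans hn hnN.
have hN1 : (1 < N)%N := leq_ltn_trans hn hnN.
have hc := M3 hN hd h1.
have hD := DD_gt0 R n N hn hnN; have hc0 := c0_gt0 R n N hn hnN.
pose i0 : 'I_N := Ordinal hN.
have hs := offdiagC i0 hd hc.
have hzz i j : i != j -> zz F G i j = d^* by move=> ij; rewrite zzE hdd.
have e : d^* = ((DD R n N)%:C)%C.
  have N1 : ((N - 1)%:R : R[i]) != 0.
    by rewrite pnatr_eq0 subn_eq0 -ltnNge.
  apply: (mulIf N1); rewrite !mulr_natr.
  rewrite -(sum_const_neq _ _ i0) -(rmorphMn (real_complex R)) DD_eq //.
  apply: (eq_trans _ hs).
  by apply: eq_bigr => j hj; rewrite hzz // eq_sym.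
apply: (rm2_le (ltW hc0) _ hc).
  by rewrite addr_ge0 ?sqrtr_ge0 // ltW.
move=> i j ij; rewrite hzz // e cmod_real ger0_norm //; exact: ltW.
Qed.

Lemma M7 (R : realType) (n N : nat) (F G : 'I_N -> 'cV[R[i]]_n) :
  (0 < n)%N -> (n < N)%N -> is_dual F G ->
  (forall k, inner (F k) (G k) = ((c0 R n N)%:C)%C) ->
  r_m 2 F G <= c0 R n N + Num.sqrt (DD R n N) -> two_uniform F G.
Proof.
move=> hn hnN hd hc hr.
have hD := DD_gt0 R n N hn hnN; have hc0 := c0_gt0 R n N hn hnN.
have key i j : i != j -> complex.Re (zz F G i j) <= DD R n N /\
    (DD R n N <= complex.Re (zz F G i j) -> zz F G i j = ((DD R n N)%:C)%C).
  move=> ij; apply: (core_rigid hc0 (ltW hD)) => l l0 hl.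
  have [hb|hb] := eqVneq ((inner (F j) (G i))^*) 0.
    move: hl; rewrite /zz hb mul0r => /eqP; rewrite sqrf_eq0 subr_eq0 => /eqP ->.
    rewrite cmod_real ger0_norm ?(ltW hc0) // lerDl; exact: sqrtr_ge0.
  apply: le_trans hr; apply: (@rm2_ge R n N F G (c0 R n N) i j l (ltW hc0) ij hc).
  by apply: (ev2_ex ij _ _ hb l0 hl); rewrite hc conjC_realC.
have hz i j : i != j -> zz F G i j = ((DD R n N)%:C)%C.
  move=> ij; apply: (key i j ij).2.
  have := @sum_gap R N (fun k => k != i) (fun k => complex.Re (zz F G i k)) (DD R n N).
  rewrite (offdiagRe i hd hc) sum_const_neq DD_eq // => /(_ erefl).
  have hle k : k != i -> complex.Re (zz F G i k) <= DD R n N.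
    move=> ki; have ik : i != k by rewrite eq_sym.
    exact: (key i k ik).1.
  have ji : j != i by rewrite eq_sym.
  by move=> /(_ hle j ji) ->.
split; first by exists ((c0 R n N)%:C)%C.
exists ((DD R n N)%:C)%C => i j ij.
by rewrite -zz_conj hz // conjC_realC.
Qed.


Lemma prim_root_ex (R : realType) (N : nat) : (0 < N)%N ->
  exists z : R[i], N.-primitive_root z.
Proof.
move=> N_gt0.
pose p : {poly R[i]} := 'X^N - 1; have [r Dp] := closed_field_poly_normal p.
rewrite (monicP _) ?monic_Xn_sub_1 // scale1r in Dp.
have rn1: all N.-unity_root r by apply/allP=> z; rewrite -root_prod_XsubC -Dp.
have sz_r: (N < (size r).+1)%N.
  by rewrite -(size_prod_XsubC r id) -Dp size_Xn_sub_1.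
have [|z] := hasP (has_prim_root N_gt0 rn1 _ sz_r); last by exists z.
by rewrite -separable_prod_XsubC -Dp separable_Xn_sub_1 // pnatr_eq0 -lt0n.
Qed.

Lemma root_facts (R : realType) (N : nat) (w : R[i]) : (0 < N)%N -> N.-primitive_root w ->
  [/\ w ^+ N = 1, w * w^* = 1 & (w^*) ^+ N = 1].
Proof.
move=> hN hw; have h1 := prim_expr_order hw.
have hn : `|w| = 1.
  apply/eqP; rewrite -(pexpr_eq1 hN) ?normr_ge0 //.
  by rewrite -normrX h1 normr1.
split => //; first by rewrite -normCK hn expr1n.
by rewrite -rmorphXn h1 rmorph1.
Qed.

Lemma orth (R : realType) (N : nat) (w : R[i]) (k l : nat) :
  (0 < N)%N -> N.-primitive_root w -> (k < N)%N -> (l < N)%N ->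
  \sum_(i < N) w ^+ (i * k) * (w ^+ (i * l))^* = if k == l then N%:R else 0.
Proof.
move=> hN hw hk hl; have [h1 hwy hy1] := root_facts R N w hN hw.
set y := w^* in hwy hy1 *.
have e i : w ^+ (i * k) * (w ^+ (i * l))^* = (w ^+ k * y ^+ l) ^+ i.
  by rewrite rmorphXn /= exprMn -!exprM mulnC [(l * i)%N]mulnC.
under eq_bigr => i _ do rewrite e.
case: eqP => [<-|kl].
  by rewrite -exprMn hwy expr1n; under eq_bigr => i _ do rewrite expr1n;
     rewrite sumr_const card_ord.
set x := w ^+ k * y ^+ l.
have e2 : w ^+ l * x = w ^+ k by rewrite /x mulrCA -exprMn hwy expr1n mulr1.
have x1 : x - 1 != 0.
  rewrite subr_eq0; apply/negP => /eqP hx.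
  move: e2; rewrite hx mulr1 => /eqP; rewrite eq_sym (eq_prim_root_expr hw).
  by rewrite !modn_small // => /eqP.
have xN : x ^+ N = 1 by rewrite /x exprMn -!exprM mulnC exprM h1 expr1n mulnC exprM hy1 expr1n mulr1.
have := subrX1 x N; rewrite xN subrr => /esym/eqP; rewrite mulf_eq0 (negPf x1) /=.
by move/eqP.
Qed.

Lemma conj_invN (R : realType) (N : nat) : ((N%:R : R[i])^-1)^* = (N%:R)^-1.
Proof. by rewrite fmorphV /= conjC_nat. Qed.

Lemma harmonic_dual (R : realType) (n N : nat) (w : R[i]) : (n < N)%N ->
  N.-primitive_root w ->
  is_dual (fun i : 'I_N => (\col_(k < n) w ^+ (i * k) : 'cV[R[i]]_n))
          (fun i : 'I_N => (N%:R)^-1 *: (\col_(k < n) w ^+ (i * k) : 'cV[R[i]]_n)).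
Proof.
move=> hnN hw; have hN : (0 < N)%N := leq_ltn_trans (leq0n n) hnN.
have N0 : (N%:R : R[i]) != 0 by rewrite pnatr_eq0 -lt0n.
move=> f; apply/matrixP => k j; rewrite (ord1 j) summxE.
under eq_bigr => i _ do rewrite mxE innerZr conj_invN mxE.
have e1 : \sum_(i < N) (N%:R)^-1 * inner f (\col_(k0 < n) w ^+ (i * k0)) * w ^+ (i * k) =
   (N%:R)^-1 * \sum_(l < n) f l 0 * \sum_(i < N) w ^+ (i * k) * (w ^+ (i * l))^*.
  rewrite mulr_sumr; under [RHS]eq_bigr => l _ do rewrite mulr_sumr mulr_sumr.
  rewrite [RHS]exchange_big /=; apply: eq_bigr => i _.
  rewrite /inner mulr_sumr mulr_suml; apply: eq_bigr => l _.
  by rewrite mxE; ring.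
rewrite e1.
have hk : (k < N)%N := ltn_trans (ltn_ord k) hnN.
under eq_bigr => l _ do rewrite (orth R N w k l hN hw hk (ltn_trans (ltn_ord l) hnN)).
rewrite (bigD1 k) //= eqxx big1 ?addr0.
  by rewrite mulrCA mulVf // mulr1.
move=> l hl; have -> : (val k == val l) = false.
  by apply/negP => /eqP /val_inj hkl; move: hl; rewrite hkl eqxx.
by rewrite mulr0.
Qed.

Lemma scaled_frame (R : realType) (n N : nat) (F : 'I_N -> 'cV[R[i]]_n) (t : R) :
  0 < t -> is_dual F (fun i => (t%:C)%C *: F i) -> is_frame F.
Proof.
move=> t0 hd.
have key f : \sum_(i < N) cmod (inner f (F i)) ^+ 2 = t^-1 * cmod (inner f f).
  apply: (@complexI R); rewrite rmorph_sum /=.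
  under eq_bigr => i _ do rewrite cmod_sqr inner_conj.
  have e : \sum_(i < N) inner f (F i) *: F i = (t^-1)%:C%C *: f.
    rewrite [in RHS](hd f) scaler_sumr; apply: eq_bigr => i _.
    rewrite innerZr conjC_realC scalerA mulrA -rmorphM /= mulVf ?gt_eqF //.
    by rewrite rmorph1 mul1r.
  rewrite -inner_suml e innerZl rmorphM /= cmodC ger0_norm //; exact: inner_ge0.
exists t^-1, t^-1; split; first by rewrite invr_gt0.
split => // f; rewrite key; split => //.
Qed.

Lemma harmonic (R : realType) (n N : nat) : (n < N)%N ->
  exists F G : 'I_N -> 'cV[R[i]]_n, dual_pair F G /\ one_uniform F G.
Proof.
move=> hnN; have hN : (0 < N)%N := leq_ltn_trans (leq0n n) hnN.
have [w hw] := prim_root_ex R N hN.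
have [h1 hwy hy1] := root_facts R N w hN hw.
pose t : R := (N%:R)^-1.
have tC : (t%:C)%C = ((N%:R : R[i])^-1) by rewrite /t fmorphV /= realC_nat.
pose F (i : 'I_N) : 'cV[R[i]]_n := \col_(k < n) w ^+ (i * k).
exists F, (fun i => (t%:C)%C *: F i).
have hd : is_dual F (fun i => (t%:C)%C *: F i).
  by rewrite tC; exact: harmonic_dual.
split; first split => //.
  by apply: (@scaled_frame R n N F t) => //; rewrite /t invr_gt0 ltr0n.
exists ((t%:C)%C * n%:R) => i.
rewrite innerZr conjC_realC; congr (_ * _).
rewrite /inner; under eq_bigr => k _ do rewrite mxE rmorphXn /= -exprMn hwy expr1n.
by rewrite sumr_const card_ord.
Qed.

Lemma rm_zero (R : realType) (N m : nat) (F G : 'I_N -> 'cV[R[i]]_0) : r_m m F G = 0.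
Proof.
apply/le_anti; rewrite RM_ge0 andbT; apply: RM_le => // L _.
apply: SR_le => // l /eigenvalueP [v _ v0].
by move: v0; rewrite (thinmx0 v) eqxx.
Qed.

Lemma r1_val (R : realType) (n N : nat) : (n < N)%N -> r1 R n N = ((c0 R n N)%:E)%E.
Proof.
move=> hnN; have hN : (0 < N)%N := leq_ltn_trans (leq0n n) hnN.
have [F0 [G0 [[hf0 hd0] hu0]]] := harmonic R n N hnN.
have hc0 : 0 <= c0 R n N by rewrite /c0 divr_ge0 ?ler0n.
apply/le_anti/andP; split.
  apply: (@le_trans _ _ ((r_m 1 F0 G0)%:E)%E).
    by apply: ereal_inf_lbound; exists (F0, G0).
  rewrite lee_fin; apply: rm1_le => // i.
  by rewrite (M3 hN hd0 hu0) cmod_real ger0_norm.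
apply: le_ereal_inf_tmp => _ [[F G] [hf hd] <-] /=.
by rewrite lee_fin; apply: M1.
Qed.

Lemma R1_iff (R : realType) (n N : nat) (F G : 'I_N -> 'cV[R[i]]_n) : (n < N)%N ->
  R1 R n N (F, G) <-> dual_pair F G /\ (forall i, inner (F i) (G i) = ((c0 R n N)%:C)%C).
Proof.
move=> hnN; have hN : (0 < N)%N := leq_ltn_trans (leq0n n) hnN.
have hc0 : 0 <= c0 R n N by rewrite /c0 divr_ge0 ?ler0n.
rewrite /R1 /= r1_val //; split => [[[hf hd] /= e]|[[hf hd] hc]].
  split => //; apply: M2 => //; move: e => [->].
  by [].
split => //=; congr (_%:E)%E; apply/le_anti/andP; split; last exact: M1.
by apply: rm1_le => // i; rewrite hc cmod_real ger0_norm.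
Qed.

Arguments R1_iff {R n N F G}.
Arguments M7 {R n N F G}.

Lemma inner_zero (R : realType) (x y : 'cV[R[i]]_0) : inner x y = 0.
Proof. by rewrite /inner big_ord0. Qed.

Lemma bound_zero (R : realType) (N : nat) : c0 R 0 N + Num.sqrt (DD R 0 N) = 0.
Proof. by rewrite /c0 /DD !mul0r sqrtr0 addr0. Qed.

Theorem theorem4p4 (R : realType) (n N : nat) :
  (n < N)%N ->
  let bound : R := n%:R / N%:R +
      Num.sqrt (n%:R * (N - n)%:R / (N%:R ^+ 2 * (N - 1)%:R)) in
  ((bound%:E <= r2 R n N)%E) /\
  ((exists (F G : 'I_N -> 'cV[R[i]]_n), dual_pair F G /\ two_uniform F G) ->
     r2 R n N = bound%:E /\
     (forall (F G : 'I_N -> 'cV[R[i]]_n), dual_pair F G ->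
        (R2 R n N (F, G) <-> two_uniform F G))).
Proof.
move=> hnN bound; change bound with (c0 R n N + Num.sqrt (DD R n N)); subst bound.
have hN : (0 < N)%N := leq_ltn_trans (leq0n n) hnN.
case: (posnP n) => [n0|hn].
  subst n; rewrite bound_zero.
  have r2le : (0%:E <= r2 R 0 N)%E.
    by apply: le_ereal_inf_tmp => _ [[F G] _ <-]; rewrite lee_fin rm_zero.
  split => // -[F0 [G0 [hp0 hu0]]].
  have hR1 F G : dual_pair F G -> R1 R 0 N (F, G).
    by move=> hp; apply/(R1_iff hnN); split => // i; rewrite inner_zero /c0 mul0r.
  have r2v : r2 R 0 N = 0%:E.
    apply/le_anti/andP; split => //.
    apply: ereal_inf_lbound; exists (F0, G0); first exact: hR1.
    by rewrite /= rm_zero.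
  split => // F G hp; split => _.
    split; first by exists 0 => i; rewrite inner_zero.
    by exists 0 => i j _; rewrite !inner_zero mul0r.
  by split; [exact: hR1 | rewrite r2v /= rm_zero].
have hc0 := c0_gt0 R n N hn hnN.
have part1 : ((c0 R n N + Num.sqrt (DD R n N))%:E <= r2 R n N)%E.
  apply: le_ereal_inf_tmp => _ [[F G] /(R1_iff hnN) [[hf hd] hc] <-] /=.
  by rewrite lee_fin; apply: M5.
split => // -[F0 [G0 [[hf0 hd0] hu0]]].
have hc00 := M3 hN hd0 hu0.1.
have r2v : r2 R n N = (c0 R n N + Num.sqrt (DD R n N))%:E.
  apply/le_anti/andP; split => //.
  apply: (@le_trans _ _ ((r_m 2 F0 G0)%:E)%E).
    by apply: ereal_inf_lbound; exists (F0, G0) => //; apply/(R1_iff hnN).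
  by rewrite lee_fin; apply: M6.
split => // F G [hf hd]; split.
  move=> [/(R1_iff hnN) [_ hc] /= e].
  apply: (M7 hn hnN hd hc); move: e; rewrite r2v => -[->].
  by [].
move=> hu; have hc := M3 hN hd hu.1.
split; first by apply/(R1_iff hnN).
rewrite r2v /=; congr (_%:E)%E; apply/le_anti/andP; split.
  exact: M6.
exact: M5.
Qed.
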